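(* Let $[0,1]=\bigsqcup_{i=1}^K I_i$ be a partition into intervals with rational Lebesgue measures $\mu(I_i)>0$. Let $N$ be the least common multiple of the denominators of the $\mu(I_i)$, $k\ge1$ and $N_k=kN\ge2$. Let $X$ be a set of $N_k$ sampled points with $m(I_i)=N_k\mu(I_i)$ points in each $I_i$, $m$ the counting measure on $X$. Let $W$ be a one-level hierarchical graphon with inter-community value $p$, and define $(Lf)(x)=\sum_{y\in X}W(x,y)(f(y)-f(x))$ for $f:X\to\mathbb R$, $x\in X$. Then every $f\in\mathcal V_{\mathrm{root}}$ satisfies $Lf=-p\,m(X)\,f$.
   Context: A one-level hierarchical graphon (relative to the partition $[0,1]=\bigsqcup_i I_i$) is a function $W:[0,1]^2\to[0,1]$ such that for each $i$, $W(x,y)=W_i(x,y)$ for $x,y\in I_i$, where $W_i$ is an arbitrary continuous symmetric function, and $W(x,y)=p$ (a fixed constant, the inter-community connection probability, denoted $w(h([0,1]))$ in the paper) whenever $x\in I_i$, $y\in I_j$, $i\ne j$. $\mathcal V_{\mathrm{root}}$ is the space of functions $\psi:X\to\mathbb R$ that are constant on each $X\cap I_i$, say equal to $a_i$, with $\sum_i m(I_i)a_i=0$. *)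

(* Defs.v *)
From HB Require Import structures.
From mathcomp Require Import all_boot all_order all_algebra.
From mathcomp Require Import all_classical all_reals all_analysis.
Set Implicit Arguments. Unset Strict Implicit. Unset Printing Implicit Defensive.
Import Order.TTheory GRing.Theory Num.Theory.
Local Open Scope ring_scope.
Import numFieldNormedType.Exports.
Local Open Scope classical_set_scope.

Section Defs.
Variables (R : realType) (K : nat).

Definition is_interval_partition (I : 'I_K -> interval R) : Prop :=
  (forall i j : 'I_K, i != j -> forall x : R, ~ (x \in I i /\ x \in I j)) /\
  (forall x : R, (0 <= x <= 1) <-> exists i : 'I_K, x \in I i).

Definition one_level_hierarchical_graphon (I : 'I_K -> interval R)
  (W : R -> R -> R) (p : R) : Prop :=
  (forall x y : R, 0 <= x <= 1 -> 0 <= y <= 1 -> 0 <= W x y <= 1) /\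
  (forall i : 'I_K,
     {within [set z : R * R | z.1 \in I i /\ z.2 \in I i],
        continuous ((fun z : R * R => W z.1 z.2) : R * R -> R)} /\
     (forall x y : R, x \in I i -> y \in I i -> W x y = W y x)) /\
  (forall (i j : 'I_K) (x y : R), i != j -> x \in I i -> y \in I j -> W x y = p).

(* counting measure m on the finite sample X (a duplicate-free list) *)
Definition cmeas (X : seq R) (A : interval R) : nat := count (fun x => x \in A) X.

Definition V_root (I : 'I_K -> interval R) (X : seq R) (f : R -> R) : Prop :=
  exists a : 'I_K -> R,
    (forall (i : 'I_K) (x : R), x \in X -> x \in I i -> f x = a i) /\
    \sum_(i < K) (cmeas X (I i))%:R * a i = 0.

Definition graph_laplacian (W : R -> R -> R) (X : seq R) (f : R -> R) (x : R) : R :=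
  \sum_(y <- X) W x y * (f y - f x).

End Defs.

(* Main.v *)
Require Import Defs.
From HB Require Import structures.
From mathcomp Require Import all_boot all_order all_algebra.
From mathcomp Require Import all_classical all_reals all_analysis.
Import Order.TTheory GRing.Theory Num.Theory.
Local Open Scope ring_scope.
Local Open Scope classical_set_scope.

Lemma cmeas_sum (R : realType) (X : seq R) (A : interval R) :
  (cmeas X A)%:R = \sum_(y <- X) ((y \in A)%:R : R).
Proof.
rewrite /cmeas; elim: X => [|y X IH]; first by rewrite big_nil.
by rewrite big_cons /= natrD IH.
Qed.

Lemma sum_const_seq' (R : realType) (X : seq R) (c : R) :
  \sum_(y <- X) c = (size X)%:R * c.
Proof.
elim: X => [|y X IH]; first by rewrite big_nil mul0r.
by rewrite big_cons IH /= -add1n natrD mulrDl mul1r.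
Qed.

Theorem proposition7p2 (R : realType) (K : nat) (I : 'I_K -> interval R)
  (q : 'I_K -> rat) (k : nat) (X : seq R) (W : R -> R -> R) (p : R) :
  is_interval_partition I ->
  (forall i : 'I_K, 0 < q i) ->
  (forall i : 'I_K, lebesgue_measure ([set` I i] : set R) = (ratr (q i) : R)%:E) ->
  (1 <= k)%N ->
  let N := (\big[lcmn/1%N]_(i < K) `|denq (q i)|%N)%N in
  let Nk := (k * N)%N in
  (2 <= Nk)%N ->
  uniq X -> size X = Nk ->
  (forall x : R, x \in X -> 0 <= x <= 1) ->
  (forall i : 'I_K, (cmeas X (I i))%:R = (Nk%:R * ratr (q i) : R)) ->
  one_level_hierarchical_graphon I W p ->
  forall f : R -> R, V_root I X f ->
  forall x : R, x \in X ->
    graph_laplacian W X f x = - p * (size X)%:R * f x.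
Proof.
move=> [disj cover] _ _ _ N Nk _ _ _ X01 _ [_ [_ Wp]] f [a [fa asum]] x xX.
have memI : forall y, y \in X -> exists j, y \in I j.
  by move=> y yX; apply/cover/X01.
have fy : forall y, y \in X -> f y = \sum_(j < K) ((y \in I j)%:R * a j).
  move=> y yX; have [j yj] := memI y yX.
  rewrite (bigD1 j) //= yj mul1r (fa j y yX yj) big1 ?addr0 //.
  move=> l lj; case yl: (y \in I l); last by rewrite mul0r.
  by exfalso; apply: (disj l j lj y).
have step : forall y, y \in X -> W x y * (f y - f x) = p * (f y - f x).
  move=> y yX; have [j yj] := memI y yX; have [i xi] := memI x xX.
  have [eij|ij] := eqVneq i j.
    by rewrite (fa j y yX yj) (fa i x xX xi) eij subrr !mulr0.
  by rewrite (Wp i j x y ij xi yj).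
rewrite /graph_laplacian (eq_big_seq (fun y => p * (f y - f x))) //.
rewrite -mulr_sumr big_split /= sumrN.
have -> : \sum_(y <- X) f y = 0.
  rewrite (eq_big_seq (fun y => \sum_(j < K) ((y \in I j)%:R * a j))); last first.
    by move=> y yX; apply: fy.
  rewrite exchange_big /= -[RHS]asum; apply: eq_bigr => j _.
  by rewrite cmeas_sum mulr_suml.
rewrite add0r (eq_big_seq (fun _ => f x)) // sum_const_seq'.
by rewrite -mulrA mulNr mulrN.
Qed.
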